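(* Let $\pi:\mathrm{G}'\to\mathrm{G}$ be a surjective group homomorphism whose kernel $\mathrm{C}=\langle c\rangle$ has order $2$. Let $\Delta=\langle(c,c)\rangle\subseteq\mathrm{G}'\times\mathrm{G}'$. Let $\mathrm{H}$ be a subgroup of $\mathrm{G}$ and $\mathrm{H}_0=\{(h,h):h\in\mathrm{H}\}$ its diagonal embedding in $\mathrm{G}\times\mathrm{G}$. Then the pull-back of $\mathrm{H}_0$ under the natural surjection $(\mathrm{G}'\times\mathrm{G}')/\Delta\to\mathrm{G}\times\mathrm{G}$ is a trivial extension of $\mathrm{H}$ by $\mathrm{C}$ (i.e. isomorphic to $\mathrm{H}\times\mathrm{C}$ as an extension).
   Context: The kernel of the natural surjection $(\mathrm{G}'\times\mathrm{G}')/\Delta\to\mathrm{G}\times\mathrm{G}$ induced by $\pi\times\pi$ is the image of $\{(1,1),(1,c)\}$, identified with $\mathrm{C}$. *)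

(* Defs.v *)
Record group_on (T : Type) := GroupOn {
  gmul : T -> T -> T;
  gone : T;
  ginv : T -> T;
  gmulA : forall x y z, gmul x (gmul y z) = gmul (gmul x y) z;
  gmul1 : forall x, gmul gone x = x;
  gmulV : forall x, gmul (ginv x) x = gone
}.
Arguments gmul {T} _ _ _.
Arguments gone {T} _.
Arguments ginv {T} _ _.

Definition is_hom {A B : Type} (gA : group_on A) (gB : group_on B) (f : A -> B) : Prop :=
  forall x y, f (gmul gA x y) = gmul gB (f x) (f y).

Definition is_subgroup {A : Type} (gA : group_on A) (S : A -> Prop) : Prop :=
  S (gone gA) /\ (forall x y, S x -> S y -> S (gmul gA x y)) /\
  (forall x, S x -> S (ginv gA x)).

Definition prod_mul {A B} (gA : group_on A) (gB : group_on B) (p q : A * B) : A * B :=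
  (gmul gA (fst p) (fst q), gmul gB (snd p) (snd q)).
Definition prod_one {A B} (gA : group_on A) (gB : group_on B) : A * B :=
  (gone gA, gone gB).

(* The pull-back of the diagonal H0 = {(h,h) : h in H} under
   (G' x G') -> G x G, (a,b) |-> (pi a, pi b); as a subgroup of G' x G'
   it contains Delta = <(c,c)>, and the pull-back in (G' x G')/Delta is its
   image modulo Delta. *)
Definition pullback_diag {G' G : Type} (pi : G' -> G) (H : G -> Prop) (p : G' * G') : Prop :=
  H (pi (fst p)) /\ pi (fst p) = pi (snd p).

(* Delta = <(c,c)> = {(1,1),(c,c)} (c has order 2). *)
Definition Delta {G' : Type} (gG' : group_on G') (c : G') (p : G' * G') : Prop :=
  p = (gone gG', gone gG') \/ p = (c, c).

Definition Cgrp {G' : Type} (gG' : group_on G') (c : G') (x : G') : Prop :=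
  x = gone gG' \/ x = c.

(* "The pull-back P/Delta is a trivial extension of H by C", i.e. there is
   an isomorphism P/Delta ~ H x C of extensions: it is phrased through a
   homomorphism phi : P -> H x C with kernel exactly Delta (so it induces an
   injective map on P/Delta), onto H x C, compatible with the projection
   P/Delta -> H, [(a,b)] |-> pi a, and with the inclusion
   C -> P/Delta, c |-> [(1,c)]. *)
Definition trivial_extension_pullback {G' G : Type}
    (gG' : group_on G') (gG : group_on G) (pi : G' -> G) (c : G') (H : G -> Prop) : Prop :=
  let P := pullback_diag pi H in
  exists phi : G' * G' -> G * G',
    (forall p q, P p -> P q ->
        phi (prod_mul gG' gG' p q) = prod_mul gG gG' (phi p) (phi q)) /\
    (forall p, P p -> fst (phi p) = pi (fst p) /\ Cgrp gG' c (snd (phi p))) /\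
    (forall p, P p -> (phi p = prod_one gG gG' <-> Delta gG' c p)) /\
    (forall h x, H h -> Cgrp gG' c x -> exists p, P p /\ phi p = (h, x)) /\
    (forall x, Cgrp gG' c x -> phi (gone gG', x) = (gone gG, x)).

(* Main.v *)
Require Import Defs.

Lemma g_mulVr {T} (g : group_on T) x : gmul g x (ginv g x) = gone g.
Proof.
  set (y := gmul g x (ginv g x)).
  assert (Hyy : gmul g y y = y).
  { unfold y. rewrite <- (gmulA _ g x), (gmulA _ g (ginv g x) x), gmulV, gmul1.
    reflexivity. }
  rewrite <- (gmul1 _ g y), <- (gmulV _ g y), <- gmulA, Hyy. reflexivity.
Qed.

Lemma g_mulr1 {T} (g : group_on T) x : gmul g x (gone g) = x.
Proof. rewrite <- (gmulV _ g x), gmulA, g_mulVr, gmul1. reflexivity. Qed.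

Lemma g_cancel {T} (g : group_on T) a x y : gmul g a x = gmul g a y -> x = y.
Proof.
  intro H. rewrite <- (gmul1 _ g x), <- (gmul1 _ g y), <- (gmulV _ g a), <- !gmulA, H.
  reflexivity.
Qed.

Lemma g_invu {T} (g : group_on T) a b : gmul g a b = gone g -> a = ginv g b.
Proof.
  intro H. rewrite <- (g_mulr1 g a), <- (g_mulVr g b), gmulA, H, gmul1. reflexivity.
Qed.

Lemma g_invM {T} (g : group_on T) x y :
  ginv g (gmul g x y) = gmul g (ginv g y) (ginv g x).
Proof.
  symmetry. apply g_invu.
  rewrite <- gmulA, (gmulA _ g (ginv g x) x y), gmulV, gmul1. apply gmulV.
Qed.

Lemma hom1 {A B} (gA : group_on A) (gB : group_on B) f :
  is_hom gA gB f -> f (gone gA) = gone gB.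
Proof.
  intro Hf. apply (g_cancel gB (f (gone gA))).
  rewrite <- Hf, gmul1, g_mulr1. reflexivity.
Qed.

Lemma homV {A B} (gA : group_on A) (gB : group_on B) f x :
  is_hom gA gB f -> f (ginv gA x) = ginv gB (f x).
Proof.
  intro Hf. apply g_invu. rewrite <- Hf, gmulV. apply (hom1 _ _ _ Hf).
Qed.

Theorem lemma3p5 (G' G : Type) (gG' : group_on G') (gG : group_on G)
    (pi : G' -> G) (c : G') (H : G -> Prop)
    (pi_hom : is_hom gG' gG pi)
    (pi_surj : forall y : G, exists x : G', pi x = y)
    (c_ne1 : c <> gone gG')
    (c_order2 : gmul gG' c c = gone gG')
    (ker_pi : forall x : G', pi x = gone gG <-> Cgrp gG' c x)
    (H_sub : is_subgroup gG H) :
  trivial_extension_pullback gG' gG pi c H.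
Proof.
  assert (central : forall k x, Cgrp gG' c k -> gmul gG' k x = gmul gG' x k).
  { intros k x [-> | ->].
    - rewrite gmul1, g_mulr1. reflexivity.
    - assert (Hk : Cgrp gG' c (gmul gG' (ginv gG' x) (gmul gG' c x))).
      { apply ker_pi. rewrite !pi_hom, (homV gG' gG pi _ pi_hom).
        rewrite (proj2 (ker_pi c)) by (right; reflexivity).
        rewrite gmul1. apply gmulV. }
      destruct Hk as [Hk | Hk].
      + exfalso. apply c_ne1.
        apply (g_cancel gG' (ginv gG' x)). rewrite g_mulr1.
        apply (f_equal (fun z => gmul gG' z (ginv gG' x))) in Hk.
        rewrite <- !gmulA, g_mulVr, g_mulr1, gmul1 in Hk. exact Hk.
      + apply (g_cancel gG' (ginv gG' x)). rewrite Hk, gmulA, gmulV, gmul1.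
        reflexivity. }
  assert (inC : forall a b, pi a = pi b -> Cgrp gG' c (gmul gG' (ginv gG' a) b)).
  { intros a b E. apply ker_pi. rewrite pi_hom, (homV gG' gG pi _ pi_hom).
    rewrite E. apply gmulV. }
  exists (fun p => (pi (fst p), gmul gG' (ginv gG' (fst p)) (snd p))).
  split; [|split; [|split; [|split]]].
  - intros [a b] [a' b'] [_ E] [_ E']. simpl in *. unfold prod_mul. simpl.
    rewrite pi_hom. f_equal.
    rewrite g_invM.
    pose proof (central _ (ginv gG' a') (inC a b E)) as Hc.
    rewrite <- gmulA, (gmulA _ gG' (ginv gG' a) b b'), gmulA, <- Hc, <- gmulA.
    reflexivity.
  - intros [a b] [_ E]. simpl in *. split; [reflexivity | apply inC; exact E].
  - intros [a b] [_ E]. simpl in *. unfold prod_one, Delta. split.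
    + intro Q. injection Q as Q1 Q2.
      assert (b = a).
      { rewrite <- (gmul1 _ gG' b), <- (g_mulVr gG' a), <- gmulA, Q2. apply g_mulr1. }
      subst b. apply ker_pi in Q1. destruct Q1 as [-> | ->]; [left|right]; reflexivity.
    + intros [Q | Q]; injection Q as -> ->.
      * rewrite (hom1 _ _ _ pi_hom), gmulV. reflexivity.
      * rewrite (proj2 (ker_pi c)) by (right; reflexivity). rewrite gmulV. reflexivity.
  - intros h x Hh Hx. destruct (pi_surj h) as [a Ha].
    exists (a, gmul gG' a x). simpl. unfold pullback_diag. simpl.
    rewrite pi_hom, (proj2 (ker_pi x) Hx), g_mulr1, Ha.
    split; [split; [exact Hh | reflexivity]|].
    rewrite gmulA, gmulV, gmul1. reflexivity.
  - intros x _. simpl. rewrite (hom1 _ _ _ pi_hom).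
    assert (E : ginv gG' (gone gG') = gone gG').
    { symmetry. apply g_invu. apply gmul1. }
    rewrite E, gmul1. reflexivity.
Qed.
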